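(* Let $\mathbf v\in\mathbb Z^4$ satisfy $Q_{\mathcal D}(\mathbf v)=-4$, and let $\mathcal C$ be the set of all integers occurring as a coordinate of some element of the orbit $\mathcal A[\mathbf v]$ (the curvatures of the corresponding integral spherical Apollonian packing). Then the set of residues modulo $12$ of elements of $\mathcal C$ omits exactly three congruence classes modulo $12$.
   Context: $Q_{\mathcal D}(a,b,c,d)=2(a^2+b^2+c^2+d^2)-(a+b+c+d)^2$. $\mathbf S_i$ ($i=1,\dots,4$) is the $4\times4$ integer matrix replacing the $i$-th coordinate $a_i$ of a column vector by $2\sum_{j\ne i}a_j-a_i$, other coordinates fixed; the Apollonian group $\mathcal A$ is the subgroup of $GL(4,\mathbb Z)$ they generate, and $\mathcal A[\mathbf v]=\{\mathbf U\mathbf v:\mathbf U\in\mathcal A\}$. *)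

(* Defs.v *)
From mathcomp Require Import all_boot all_order all_algebra.
Set Implicit Arguments. Unset Strict Implicit. Unset Printing Implicit Defensive.
Import Order.TTheory GRing.Theory Num.Theory.
Local Open Scope ring_scope.

Definition QD (v : 'cV[int]_4) : int :=
  2 * (\sum_(i < 4) v i 0 ^+ 2) - (\sum_(i < 4) v i 0) ^+ 2.

Definition Sgen (i : 'I_4) : 'M[int]_4 :=
  \matrix_(j < 4, k < 4)
    (if j == i then (if k == i then -1 else 2) else (j == k)%:R).

Inductive apollonian : 'M[int]_4 -> Prop :=
  | apo_id : apollonian 1%:M
  | apo_gen i : apollonian (Sgen i)
  | apo_mul U V : apollonian U -> apollonian V -> apollonian (U *m V)
  | apo_inv U : apollonian U -> apollonian (invmx U).

Definition orbit_A (v : 'cV[int]_4) (w : 'cV[int]_4) : Prop :=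
  exists U, apollonian U /\ w = U *m v.

Definition curvatures (v : 'cV[int]_4) (c : int) : Prop :=
  exists w i, orbit_A v w /\ c = w i 0.

(* Main.v *)
Require Import Defs.
From mathcomp Require Import all_boot all_order all_algebra.
From mathcomp Require Import ring lra zify.
Import Order.TTheory GRing.Theory Num.Theory.
Definition tup := (nat * nat * nat * nat)%type.
Definition stp (i : nat) (x : tup) : tup :=
  let: (a,b,c,d) := x in
  match i with
  | 0 => ((2*(b+c+d) + 11*a) %% 12, b, c, d)
  | 1 => (a, (2*(a+c+d) + 11*b) %% 12, c, d)
  | 2 => (a, b, (2*(a+b+d) + 11*c) %% 12, d)
  | _ => (a, b, c, (2*(a+b+c) + 11*d) %% 12)
  end.
Definition teq (x y : tup) : bool := let: (a,b,c,d) := x in let: (a',b',c',d') := y in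
  [&& eqn a a', eqn b b', eqn c c' & eqn d d'].
Fixpoint tmem (x : tup) (s : seq tup) : bool := if s is y :: s' then teq x y || tmem x s' else false.
Fixpoint tundup (s : seq tup) : seq tup := if s is y :: s' then (if tmem y s' then tundup s' else y :: tundup s') else [::].
Definition nbrs (y : tup) : seq tup := [:: stp 0 y; stp 1 y; stp 2 y; stp 3 y].
Definition grow (O : seq tup) := tundup (O ++ flatten (map nbrs O)).
Definition clos n x := iter n grow [:: x].
Definition closedb (O : seq tup) := all (fun y => all (fun z => tmem z O) (nbrs y)) O.
Definition coords (O : seq tup) : seq nat :=
  flatten (map (fun y : tup => let: (a,b,c,d) := y in [:: a;b;c;d]) O).
Definition good O := count (fun k => k \notin coords O) (iota 0 12) == 3.
Definition alleven (x : tup) := let: (a,b,c,d) := x in [&& ~~ odd a, ~~ odd b, ~~ odd c & ~~ odd d].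
Definition allodd (x : tup) := let: (a,b,c,d) := x in [&& odd a, odd b, odd c & odd d].
Definition Qc (m : nat) (x : tup) := let: (a,b,c,d) := x in
  (2*(a*a+b*b+c*c+d*d) + 4) %% m == (a+b+c+d)*(a+b+c+d) %% m.
Definition Qcond12 x := [&& Qc 24 x, ~~ alleven x & ~~ allodd x].
Definition chk n (P : tup -> bool) :=
  all (fun a => all (fun b => all (fun c => all (fun d => P (a,b,c,d)) (iota 0 n)) (iota 0 n)) (iota 0 n)) (iota 0 n).
Definition allT n : seq tup := flatten (map (fun a => flatten (map (fun b => flatten (map (fun c =>
   map (fun d => (a,b,c,d)) (iota 0 n)) (iota 0 n))) (iota 0 n))) (iota 0 n)).
Definition K := 8.
Definition build_step (acc : seq (seq tup)) (x : tup) :=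
  if has (fun O => tmem x O) acc then acc else clos K x :: acc.
Definition orbs := foldl build_step [::] (filter Qcond12 (allT 12)).
Definition check1f (os : seq (seq tup)) := chk 12 (fun x => if Qcond12 x then has (fun O => tmem x O) os else true).
Definition bnd (x : tup) := let: (a,b,c,d) := x in [&& a < 12, b < 12, c < 12 & d < 12]%N.
Definition check2 := all (fun O => [&& closedb O, good O, all bnd O & let C := clos K (head (0,0,0,0) O) in all (fun y => tmem y C) O]) orbs.

Lemma L1 : check1f orbs. Proof. vm_compute. reflexivity. Qed.
Lemma L2 : check2. Proof. vm_compute. reflexivity. Qed.
Lemma L3 : chk 12 (fun z => all (fun i => teq (stp i (stp i z)) z) [:: 0;1;2;3]). Proof. vm_compute. reflexivity. Qed.
Lemma L4 : chk 8 (fun y => if Qc 16 y then (~~ alleven y && ~~ allodd y) else true). Proof. vm_compute. reflexivity. Qed.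

Local Open Scope ring_scope.

Definition res (m : nat) (a : int) : nat := `|(a %% m%:Z)%Z|%N.

Lemma resE (m : nat) a : (0 < m)%N -> (res m a)%:Z = (a %% m%:Z)%Z.
Proof. move=> m0; rewrite /res gez0_abs // modz_ge0 //; by case: m m0. Qed.

Lemma res_split (m : nat) a : (0 < m)%N -> a = (a %/ m%:Z)%Z * m%:Z + (res m a)%:Z.
Proof. move=> m0; rewrite resE //; exact: divz_eq. Qed.

Lemma res_lt (m : nat) a : (0 < m)%N -> (res m a < m)%N.
Proof. move=> m0; by rewrite -ltz_nat resE // ltz_pmod. Qed.

Lemma res_eq (m : nat) a b : (m%:Z %| a - b)%Z -> res m a = res m b.
Proof. move=> H; rewrite /res; have /eqP -> // : (a == b %[mod m%:Z])%Z by rewrite eqz_mod_dvd. Qed.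

Lemma res_nat (m n : nat) : res m n%:Z = (n %% m)%N.
Proof. by rewrite /res modz_nat. Qed.

Lemma decomp (m : nat) a : (0 < m)%N -> exists q (r : nat), a = q * m%:Z + r%:Z /\ res m a = r.
Proof. move=> m0; exists (a %/ m%:Z)%Z, (res m a); split => //; exact: res_split. Qed.

Lemma res_lin (a b c d e : int) : e = 2 * (b + c + d) - a ->
  res 12 e = ((2 * (res 12 b + res 12 c + res 12 d) + 11 * res 12 a) %% 12)%N.
Proof.
move=> ->; rewrite -res_nat; apply: res_eq; apply/dvdzP.
case: (decomp 12 a isT) => qa [ra [ha ->]].
case: (decomp 12 b isT) => qb [rb [hb ->]].
case: (decomp 12 c isT) => qc [rc [hc ->]].
case: (decomp 12 d isT) => qd [rd [hd ->]].
rewrite ha hb hc hd.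
exists (2 * (qb + qc + qd) - qa - ra%:Z). rewrite !PoszD. ring.
Qed.

Definition Qf (a b c d : int) := 2 * (a ^+ 2 + b ^+ 2 + c ^+ 2 + d ^+ 2) - (a + b + c + d) ^+ 2.

Lemma Qmod (h : nat) a b c d : (0 < h)%N ->
  ((4 * h)%N%:Z %| Qf a b c d - Qf (res (2 * h) a)%:Z (res (2 * h) b)%:Z (res (2 * h) c)%:Z (res (2 * h) d)%:Z)%Z.
Proof.
move=> h0; have m0 : (0 < 2 * h)%N by rewrite muln_gt0.
apply/dvdzP.
case: (decomp (2 * h) a m0) => qa [ra [ha ->]].
case: (decomp (2 * h) b m0) => qb [rb [hb ->]].
case: (decomp (2 * h) c m0) => qc [rc [hc ->]].
case: (decomp (2 * h) d m0) => qd [rd [hd ->]].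
rewrite ha hb hc hd /Qf.
set K := qa + qb + qc + qd. set t := (ra%:Z + rb%:Z + rc%:Z + rd%:Z).
exists ((2 * qa * ra%:Z + 2 * qa ^+ 2 * h%:Z) + (2 * qb * rb%:Z + 2 * qb ^+ 2 * h%:Z)
  + (2 * qc * rc%:Z + 2 * qc ^+ 2 * h%:Z) + (2 * qd * rd%:Z + 2 * qd ^+ 2 * h%:Z)
  - (K * t + K ^+ 2 * h%:Z)).
rewrite /K /t !PoszM. ring.
Qed.


Lemma Qc_of (m : nat) (a b c d : nat) : (m%:Z %| Qf a%:Z b%:Z c%:Z d%:Z + 4)%Z -> Qc m (a, b, c, d).
Proof.
move=> H; rewrite /Qc.
have : ((2*(a*a+b*b+c*c+d*d) + 4)%N%:Z %% m%:Z = ((a+b+c+d)*(a+b+c+d))%N%:Z %% m%:Z)%Z.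
  apply/eqP; rewrite eqz_mod_dvd.
  suff -> : ((2*(a*a+b*b+c*c+d*d) + 4)%N%:Z - ((a+b+c+d)*(a+b+c+d))%N%:Z = Qf a%:Z b%:Z c%:Z d%:Z + 4) by [].
  rewrite /Qf !PoszD !PoszM. ring.
by rewrite !modz_nat => -[->].
Qed.

Lemma par (a : int) : odd (res 12 a) = odd (res 8 a).
Proof.
have : res 2 (res 12 a)%:Z = res 2 (res 8 a)%:Z.
  apply: res_eq; apply/dvdzP.
  case: (decomp 12 a isT) => q1 [r1 [h1 ->]].
  case: (decomp 8 a isT) => q2 [r2 [h2 ->]].
  exists (4 * q2 - 6 * q1). move: h2; rewrite h1 => h2.
  have -> : r1%:Z = q2 * 8 + r2%:Z - q1 * 12 by rewrite -h2; ring.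
  ring.
rewrite !res_nat !modn2. by case: odd; case: odd.
Qed.

Definition i0 : 'I_4 := @Ordinal 4 0 isT.
Definition i1 : 'I_4 := @Ordinal 4 1 isT.
Definition i2 : 'I_4 := @Ordinal 4 2 isT.
Definition i3 : 'I_4 := @Ordinal 4 3 isT.

Lemma ord4P (j : 'I_4) : j = i0 \/ j = i1 \/ j = i2 \/ j = i3.
Proof.
case: j => [[|[|[|[|k]]]] Hk].
- by left; apply/val_inj.
- by right; left; apply/val_inj.
- by right; right; left; apply/val_inj.
- by right; right; right; apply/val_inj.
- by [].
Qed.

Lemma sum4 (F : 'I_4 -> int) : \sum_(k < 4) F k = F i0 + F i1 + F i2 + F i3.
Proof.
rewrite !big_ord_recl big_ord0 addr0 !addrA.
by congr (F _ + F _ + F _ + F _); apply/val_inj.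
Qed.

Lemma SgenE n i (A : 'M[int]_(4, n)) j k :
  (Sgen i *m A) j k = if j == i then 2 * (\sum_(l < 4) A l k) - 3 * A i k else A j k.
Proof.
rewrite mxE; case: eqP => [->|ne].
  rewrite (bigD1 i) //= !mxE !eqxx [in RHS](bigD1 i) //=.
  rewrite (eq_bigr (fun l => 2 * A l k)) => [|l /negbTE nl]; last by rewrite mxE eqxx nl.
  rewrite -big_distrr /=; ring.
rewrite (bigD1 j) //= !mxE eqxx (introF eqP ne) mul1r big1 ?addr0 // => l nl.
by rewrite mxE (introF eqP ne) eq_sym (negbTE nl) mul0r.
Qed.

Lemma Sgen2 i : Sgen i *m Sgen i = 1%:M.
Proof.
apply/matrixP => j k; rewrite SgenE sum4.
by case: (ord4P i) => [->|[->|[->|->]]]; case: (ord4P j) => [->|[->|[->|->]]];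
  case: (ord4P k) => [->|[->|[->|->]]]; rewrite !mxE /=.
Qed.

Definition word (l : seq 'I_4) : 'M[int]_4 := foldr (fun i M => Sgen i *m M) 1%:M l.

Lemma wordX n (l : seq 'I_4) (X : 'M[int]_(4, n)) : foldr (fun i M => Sgen i *m M) X l = word l *m X.
Proof. elim: l => [|i l IH] /=; first by rewrite mul1mx. by rewrite IH mulmxA. Qed.

Lemma word_rev (l : seq 'I_4) : word l *m word (rev l) = 1%:M.
Proof.
elim: l => [|i l IH] /=; first by rewrite mul1mx.
rewrite rev_cons /word foldr_rcons -/(word _) wordX mulmx1.
by rewrite -mulmxA (mulmxA (word l)) IH mul1mx Sgen2.
Qed.

Lemma invmx_of (A B : 'M[int]_4) : A *m B = 1%:M -> invmx A = B.
Proof.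
move=> AB; have [Au _] := mulmx1_unit AB.
by rewrite -[invmx A]mulmx1 -AB mulmxA mulVmx // mul1mx.
Qed.

Lemma word_cat l1 l2 : word (l1 ++ l2) = word l1 *m word l2.
Proof. by rewrite {1}/word foldr_cat wordX. Qed.

Lemma apo_word U : apollonian U -> exists l, U = word l.
Proof.
elim => [|i|U1 V1 _ [l1 ->] _ [l2 ->]|U1 _ [l ->]].
- by exists [::].
- by exists [:: i]; rewrite /word /= mulmx1.
- by exists (l1 ++ l2); rewrite word_cat.
- by exists (rev l); apply: invmx_of; apply: word_rev.
Qed.

Lemma word_apo l : apollonian (word l).
Proof. elim: l => [|i l IH] /=; [exact: apo_id | exact: apo_mul (apo_gen i) IH]. Qed.

Lemma teqE (x y : tup) : teq x y = (x == y).
Proof.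
case: x => [[[a b] c] d]; case: y => [[[a' b'] c'] d'].
by rewrite /teq !xpair_eqE !eqnE -!andbA.
Qed.

Lemma tmemE (x : tup) s : tmem x s = (x \in s).
Proof. elim: s => [|y s IH] //=; by rewrite in_cons IH teqE. Qed.

Lemma mem_tundup (x : tup) s : (x \in tundup s) = (x \in s).
Proof.
elim: s => [|y s IH] //=; case: ifP => H; rewrite ?in_cons IH //.
rewrite tmemE in H; case: eqP => // ->; by rewrite H.
Qed.

Lemma chkP n P a b c d : chk n P -> (a < n)%N -> (b < n)%N -> (c < n)%N -> (d < n)%N -> P (a, b, c, d).
Proof.
move=> H ha hb hc hd.
move/allP: H => /(_ a); rewrite mem_iota ha => /(_ isT).
move/allP => /(_ b); rewrite mem_iota hb => /(_ isT).
move/allP => /(_ c); rewrite mem_iota hc => /(_ isT).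
move/allP => /(_ d); rewrite mem_iota hd => /(_ isT).
done.
Qed.

Arguments chkP {n P a b c d}.

Definition act (l : seq 'I_4) (x : tup) : tup := foldr (fun (i : 'I_4) y => stp i y) x l.

Lemma mem_nbrs (y z : tup) : z \in nbrs y -> exists i : 'I_4, z = stp i y.
Proof.
rewrite !in_cons in_nil orbF => /or4P [] /eqP ->.
- by exists i0. - by exists i1. - by exists i2. - by exists i3.
Qed.

Lemma nbrs_mem (y : tup) (i : 'I_4) : stp i y \in nbrs y.
Proof. by case: (ord4P i) => [->|[->|[->|->]]]; rewrite !in_cons eqxx ?orbT. Qed.

Lemma clos_reach n x y : y \in clos n x -> exists l, y = act l x.
Proof.
elim: n y => [|n IH] y /=.
  by rewrite in_cons in_nil orbF => /eqP ->; exists [::].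
rewrite mem_tundup mem_cat => /orP [/IH //|/flatten_mapP [z zO /mem_nbrs [i yE]]].
have [l zE] := IH z zO.
by exists (i :: l); rewrite yE zE.
Qed.

Lemma closed_act O x l : closedb O -> x \in O -> act l x \in O.
Proof.
move=> /allP cO xO; elim: l => [|i l IH] //=.
move: (cO _ IH) => /allP /(_ _ (nbrs_mem _ i)); by rewrite tmemE.
Qed.


Lemma stp_bnd i x : bnd x -> bnd (stp i x).
Proof.
case: x => [[[a b] c] d] /and4P [ha hb hc hd].
by case: i => [|[|[|i]]] /=; rewrite ?ha ?hb ?hc ?hd ltn_pmod.
Qed.

Lemma act_bnd l x : bnd x -> bnd (act l x).
Proof. move=> bx; elim: l => [|i l IH] //=; exact: stp_bnd. Qed.

Lemma stp_inv (i : 'I_4) x : bnd x -> stp i (stp i x) = x.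
Proof.
case: x => [[[a b] c] d] /and4P [ha hb hc hd].
have := chkP L3 ha hb hc hd => /allP /(_ (nat_of_ord i)).
rewrite teqE; move/(_ _)/eqP; apply.
by case: (ord4P i) => [->|[->|[->|->]]].
Qed.

Lemma act_rev l x : bnd x -> act (rev l) (act l x) = x.
Proof.
move=> bx; elim: l => [|i l IH] //=.
by rewrite rev_cons /act foldr_rcons -/(act _ _) stp_inv ?act_bnd.
Qed.

Definition proj (x : tup) (j : nat) : nat := let: (a,b,c,d) := x in nth 0%N [:: a; b; c; d] j.

Lemma coords_mem O y (j : 'I_4) : y \in O -> proj y j \in coords O.
Proof.
elim: O => [|z O IH] //=; rewrite in_cons => /orP [/eqP ->|/IH]; rewrite mem_cat.
  case: z => [[[a b] c] d] /=.
  by case: (ord4P j) => [->|[->|[->|->]]]; rewrite /= !in_cons eqxx ?orbT.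
by move=> ->; rewrite orbT.
Qed.

Lemma coords_ex O k : k \in coords O -> exists y (j : 'I_4), y \in O /\ proj y j = k.
Proof.
elim: O => [|z O IH] //=; rewrite mem_cat => /orP [|/IH [y [j [yO <-]]]].
  case: z => [[[a b] c] d] /=; rewrite !in_cons in_nil orbF => /or4P [] /eqP ->.
  - by exists (a, b, c, d), i0; rewrite in_cons eqxx.
  - by exists (a, b, c, d), i1; rewrite in_cons eqxx.
  - by exists (a, b, c, d), i2; rewrite in_cons eqxx.
  - by exists (a, b, c, d), i3; rewrite in_cons eqxx.
by exists y, j; rewrite in_cons yO orbT.
Qed.

Definition rv (m : nat) (w : 'cV[int]_4) : tup :=
  (res m (w i0 0), res m (w i1 0), res m (w i2 0), res m (w i3 0)).

Lemma rv_step i (w : 'cV[int]_4) : rv 12 (Sgen i *m w) = stp i (rv 12 w).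
Proof.
rewrite /rv !SgenE sum4.
case: (ord4P i) => [->|[->|[->|->]]] /=; congr (_, _, _, _); apply: res_lin; ring.
Qed.

Lemma rv_word l (w : 'cV[int]_4) : rv 12 (word l *m w) = act l (rv 12 w).
Proof. elim: l => [|i l IH] /=; first by rewrite mul1mx. by rewrite -mulmxA rv_step IH. Qed.

Lemma res_proj (w : 'cV[int]_4) (j : 'I_4) : res 12 (w j 0) = proj (rv 12 w) j.
Proof. by case: (ord4P j) => [->|[->|[->|->]]]. Qed.

Lemma QDE v : QD v = Qf (v i0 0) (v i1 0) (v i2 0) (v i3 0).
Proof. by rewrite /QD !sum4. Qed.

Lemma Qc_v (h : nat) (v : 'cV[int]_4) : (0 < h)%N -> QD v = -4 ->
  Qc (4 * h) (rv (2 * h) v).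
Proof.
move=> h0; rewrite QDE => hQ; rewrite /rv; apply: Qc_of.
have := Qmod h (v i0 0) (v i1 0) (v i2 0) (v i3 0) h0; rewrite hQ => H.
have E : forall X : int, X + 4 = - (-4 - X) by move=> X; ring.
by rewrite E rpredN.
Qed.

Lemma card_count (P : pred nat) : #|[set r : 'I_12 | P (nat_of_ord r)]| = count P (iota 0 12).
Proof. by rewrite cardsE cardE /enum_mem size_filter -enumT -val_enum_ord count_map. Qed.

Lemma resE12 a : (res 12 a)%:Z = (a %% 12)%Z.
Proof. exact: (resE 12 a isT). Qed.

Lemma head_mem (T : eqType) (d : T) (s : seq T) (y : T) : y \in s -> head d s \in s.
Proof. by case: s => //= z s' _; rewrite in_cons eqxx. Qed.

Opaque orbs.

Theorem theorem5p1 (v : 'cV[int]_4) :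
  QD v = -4 ->
  exists S : {set 'I_12},
    #|S| = 3%N /\
    forall r : 'I_12,
      r \in S <-> ~ (exists c : int, curvatures v c /\ (c %% 12)%Z = (nat_of_ord r)%:Z).
Proof.
move=> hQ.
set x := rv 12 v.
have bx : bnd x by rewrite /bnd /x /rv !res_lt.
have Qx : Qcond12 x.
  have Q24 : Qc 24 x := Qc_v 6 v isT hQ.
  have Q16 : Qc 16 (rv 8 v) := Qc_v 4 v isT hQ.
  have := @chkP 8 _ (res 8 (v i0 0)) (res 8 (v i1 0)) (res 8 (v i2 0)) (res 8 (v i3 0)) L4.
  rewrite !res_lt // => /(_ isT isT isT isT); rewrite -/(rv 8 v) Q16.
  by rewrite /Qcond12 Q24 /x /rv /alleven /allodd !par.
have := @chkP 12 _ (res 12 (v i0 0)) (res 12 (v i1 0)) (res 12 (v i2 0)) (res 12 (v i3 0)) L1.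
rewrite !res_lt // => /(_ isT isT isT isT); rewrite -/(rv 12 v) -/x Qx.
case/hasP => O Oorbs; rewrite tmemE => xO.
move/allP: L2 => /(_ O Oorbs) /and4P [cO gO bO /allP hO].
set h := head (0,0,0,0)%N O.
exists [set r : 'I_12 | nat_of_ord r \notin coords O]; split.
  by rewrite (card_count (fun k => k \notin coords O)); apply/eqP.
move=> r; rewrite inE; split.
  move=> rS [c [[w [j [[U [aU ->]] ->]]] hc]].
  have [l Ul] := apo_word _ aU; subst U.
  move: hc; rewrite -resE12 => -[hc].
  move: rS; rewrite -hc res_proj rv_word -/x => /negP; apply.
  apply: (coords_mem O (act l x) j); exact: (closed_act O x l cO xO).
move=> H; apply/negP => rC; apply: H.
have [y [j [yO yr]]] := coords_ex _ _ rC.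
have hO' : forall z, z \in O -> exists l, z = act l h.
  by move=> z zO; move: (hO z zO); rewrite tmemE => /clos_reach.
have [l1 yE] := hO' y yO.
have [l2 xE] := hO' x xO.
have hin : h \in O := head_mem _ _ _ _ xO.
have bh : bnd h by move/allP: bO; apply.
have hx : h = act (rev l2) x by rewrite xE act_rev.
exists ((word (l1 ++ rev l2) *m v) j 0); split.
  exists (word (l1 ++ rev l2) *m v), j; split; last reflexivity.
  exists (word (l1 ++ rev l2)); split; [exact: word_apo | reflexivity].
rewrite -resE12 res_proj rv_word -/x /act foldr_cat -/(act (rev l2) x) -hx -/(act l1 h).
by rewrite -yE yr.
Qed.
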